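(* Let $q$ be an odd prime power and $d\ge 2$. Let $V$ be a $(2d+1)$-dimensional vector space over $\mathbb{F}_q$ with basis $z,e_0,f_0,x,y,e_1,f_1,\dots,e_{d-2},f_{d-2}$ and nondegenerate symmetric bilinear form $\beta$ with $V=\langle z\rangle\perp\langle e_0,f_0\rangle\perp\langle x,y\rangle\perp\langle e_1,f_1\rangle\perp\cdots\perp\langle e_{d-2},f_{d-2}\rangle$, $\beta(z,z)=1$, $\beta(e_i,f_i)=1$, $\beta(e_i,e_i)=\beta(f_i,f_i)=0$, and $\langle x,y\rangle$ anisotropic; let $\kappa(v)=\beta(v,v)/2$ and let $\mathcal{Q}(2d,q)$ be the associated parabolic quadric. Let $W=\langle z,e_0,f_0\rangle$, $U=W^\perp$, $B=\{g\oplus 1_U: g\in\Omega(W)\}$ with $\Omega(W)$ the derived subgroup of the orthogonal group of $(W,\kappa|_W)$, and let $\tau$ be the linear map with $z\mapsto -z$ fixing all other basis vectors. Then for every point $P$ of $\mathcal{Q}(2d,q)$ there exists $g\in B$ with $P^g=P^\tau$.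
   Context: A point of $\mathcal{Q}(2d,q)$ is a $1$-dimensional subspace of $V$ on which $\kappa$ vanishes. *)

(* Defs.v *)
From HB Require Import structures.
From mathcomp Require Import all_boot all_order all_algebra all_fingroup all_field.
Unset Printing Implicit Defensive.
Import GRing.Theory.
Local Open Scope ring_scope.

(* Coordinates w.r.t. the ordered basis z, e0, f0 | x, y, e1, f1, ..., e_{d-2}, f_{d-2}.
   Vectors are row vectors, linear maps act on the right (v |-> v *m M). *)

Definition gramW (F : fieldType) : 'M[F]_3 :=
  \matrix_(i < 3, j < 3)
    (if (i == 0%N :> nat) && (j == 0%N :> nat) then 1
     else if ((i == 1%N :> nat) && (j == 2%N :> nat)) || ((i == 2%N :> nat) && (j == 1%N :> nat))
          then 1 else 0).

(* Gram matrix of beta on U = <x,y> _|_ <e1,f1> _|_ ... _|_ <e_{d-2},f_{d-2}>,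
   where beta(x,x)=a, beta(x,y)=b, beta(y,y)=c. *)
Definition gramU (F : fieldType) (d : nat) (a b c : F) : 'M[F]_(2 * (d - 1)) :=
  \matrix_(i < 2 * (d - 1), j < 2 * (d - 1))
    (if (i < 2)%N && (j < 2)%N then
       (if (i == 0%N :> nat) && (j == 0%N :> nat) then a
        else if (i == 1%N :> nat) && (j == 1%N :> nat) then c else b)
     else if (i./2 == j./2) && (i != j :> nat) then 1 else 0).

Definition gramV (F : fieldType) (d : nat) (a b c : F) : 'M[F]_(3 + 2 * (d - 1)) :=
  block_mx (gramW F) 0 0 (gramU F d a b c).

Definition anisotropic2 (F : fieldType) (a b c : F) : Prop :=
  forall s t : F, (s, t) != (0, 0) -> a * s ^+ 2 + 2 * b * s * t + c * t ^+ 2 != 0.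

Definition kappa (F : fieldType) (n : nat) (G : 'M[F]_n) (v : 'rV[F]_n) : F :=
  (v *m G *m v^T) 0 0 / 2.

(* points of the quadric: nonzero vectors (spanning 1-spaces) on which kappa vanishes *)
Definition is_point (F : fieldType) (d : nat) (a b c : F) (v : 'rV[F]_(3 + 2 * (d - 1))) : Prop :=
  v != 0 /\ kappa F (3 + 2 * (d - 1)) (gramV F d a b c) v = 0.

Definition OW (F : finFieldType) : {set {'GL_3[F]}} :=
  [set g : {'GL_3[F]} | [forall w : 'rV[F]_3,
     kappa F 3 (gramW F) (w *m GLval g) == kappa F 3 (gramW F) w]].

Definition OmegaW (F : finFieldType) : {set {'GL_3[F]}} := [~: OW F, OW F]%g.

Definition extU (F : finFieldType) (d : nat) (g : {'GL_3[F]}) : 'M[F]_(3 + 2 * (d - 1)) :=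
  block_mx (GLval g) 0 0 1%:M.

Definition tau (F : fieldType) (d : nat) : 'M[F]_(3 + 2 * (d - 1)) :=
  \matrix_(i, j) (if i == j then (if (i == 0%N :> nat) then -1 else 1) else 0).

(* Main.v *)
Require Import Defs.
From HB Require Import structures.
From mathcomp Require Import all_boot all_order all_algebra all_fingroup all_field.
From mathcomp Require Import ring.
Import GRing.Theory.
Local Open Scope ring_scope.

Section W.
Variable F : finFieldType.
Definition i0 : 'I_3 := ord0.
Definition i1 : 'I_3 := lift ord0 ord0.
Definition i2 : 'I_3 := lift ord0 (lift ord0 ord0).
Definition bil (x y : 'rV[F]_3) := (x *m gramW F *m y^T) 0 0.
Lemma bilE x y : bil x y = x 0 i0 * y 0 i0 + x 0 i1 * y 0 i2 + x 0 i2 * y 0 i1.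
Proof.
rewrite /bil !mxE !big_ord_recl big_ord0 /= !mxE !big_ord_recl !big_ord0 /= !mxE /=.
rewrite /i0 /i1 /i2; ring.
Qed.
Lemma vec3P (x y : 'rV[F]_3) : x 0 i0 = y 0 i0 -> x 0 i1 = y 0 i1 -> x 0 i2 = y 0 i2 -> x = y.
Proof.
move=> h0 h1 h2; apply/rowP => -[[|[|[|j]]] hj] //.
- by rewrite (_ : Ordinal hj = i0) //; apply: val_inj.
- by rewrite (_ : Ordinal hj = i1) //; apply: val_inj.
- by rewrite (_ : Ordinal hj = i2) //; apply: val_inj.
Qed.
Lemma bilC x y : bil x y = bil y x.
Proof. rewrite !bilE; ring. Qed.
Lemma bilBl x y a s : bil (x - s *: a) y = bil x y - s * bil a y.
Proof. rewrite !bilE !mxE; ring. Qed.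
Lemma bilBr x y a s : bil y (x - s *: a) = bil y x - s * bil y a.
Proof. by rewrite bilC bilBl (bilC x) (bilC a). Qed.

Definition R (a : 'rV[F]_3) : 'M[F]_3 :=
  1%:M - (2 / bil a a) *: (gramW F *m a^T *m a).

Lemma Rv v a : v *m R a = v - (2 * bil v a / bil a a) *: a.
Proof.
rewrite /R mulmxBr mulmx1 -scalemxAr !mulmxA.
rewrite [v *m _ *m _]mx11_scalar mul_scalar_mx scalerA.
by rewrite -/(bil v a) mulrAC mulrC mulrA.
Qed.

Lemma RR a (v : 'rV[F]_3) : bil a a != 0 -> v *m R a *m R a = v.
Proof.
move=> ha; rewrite !Rv bilBl; apply: vec3P; rewrite !mxE; field; exact: ha.
Qed.

Lemma bilR a x y : bil a a != 0 -> bil (x *m R a) (y *m R a) = bil x y.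
Proof. move=> ha; rewrite !Rv bilBl !bilBr (bilC a y); field; exact: ha. Qed.

Lemma Rconj a c (v : 'rV[F]_3) : bil a a != 0 -> bil c c != 0 ->
  v *m R c *m R a *m R c = v *m R (a *m R c).
Proof.
move=> ha hc.
rewrite [v *m R c *m R a]Rv mulmxBl -scalemxAl RR // [RHS]Rv bilR //.
by rewrite -(bilR c (v *m R c) a hc) RR.
Qed.

Lemma RRm a : bil a a != 0 -> R a *m R a = 1%:M.
Proof.
move=> ha; apply/row_matrixP => i; rewrite !rowE mulmxA RR // mulmx1 //.
Qed.

Definition vec3 (x y z : F) : 'rV[F]_3 := \row_(j < 3) [:: x; y; z]`_j.
Definition zvec := vec3 1 0 0.

Lemma kappaE v : kappa F 3 (gramW F) v = bil v v / 2.
Proof. by []. Qed.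

Lemma hz : bil zvec zvec = 1.
Proof. by rewrite bilE !mxE /=; ring. Qed.

Definition T3 : 'M[F]_3 :=
  \matrix_(i, j) (if i == j then (if (i == 0%N :> nat) then -1 else 1) else 0).

Lemma T3E (w : 'rV[F]_3) : w *m T3 = w *m R zvec.
Proof.
rewrite Rv hz; apply: vec3P; rewrite !mxE !big_ord_recl big_ord0 /= !mxE /= bilE !mxE /= /i0 /i1 /i2; rewrite divr1; ring.
Qed.

Section Wvec.
Hypothesis hF : (2 : F) != 0.
Variable w : 'rV[F]_3.
Definition bvec : 'rV[F]_3 :=
  if w 0 i1 != 0 then vec3 1 0 (w 0 i0 / w 0 i1)
  else if w 0 i2 != 0 then vec3 1 (w 0 i0 / w 0 i2) 0 else vec3 0 1 (1/2).
Definition cvec := zvec + bvec.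

Lemma bvec_facts : [/\ bil bvec bvec = 1, bil (w *m R zvec) bvec = 0 &
   (bvec 0 i0 = 0 \/ bvec 0 i0 = 1)].
Proof.
rewrite /bvec; case: ifPn => h1.
  rewrite !bilE Rv !mxE /= bilE !mxE /= hz; split.
  - by field; rewrite h1.
  - by field; rewrite oner_eq0 h1.
  - by right.
case: ifPn => h2.
  rewrite !bilE Rv !mxE /= bilE !mxE /= hz; split.
  - by field; rewrite h2.
  - by field; rewrite oner_eq0 h2.
  - by right.
rewrite !bilE Rv !mxE /= bilE !mxE /= hz; move/negbNE/eqP: h1 => ->; move/negbNE/eqP: h2 => ->; split.
- by field.
- by field; rewrite oner_eq0.
- by left.
Qed.
End Wvec.

Lemma bilN (x y : 'rV[F]_3) : bil x (- y) = - bil x y.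
Proof. by rewrite !bilE !mxE; ring. Qed.

Lemma Runit a : bil a a != 0 -> R a \in unitmx.
Proof. by move=> ha; case: (mulmx1_unit (RRm a ha)). Qed.

Definition GLR a (ha : bil a a != 0) : {'GL_3[F]} := Sub (R a) (Runit a ha).

Lemma GLRE a ha : GLval (GLR a ha) = R a.
Proof. by rewrite /GLR SubK. Qed.

Lemma invR a : bil a a != 0 -> invmx (R a) = R a.
Proof.
move=> ha; rewrite -[invmx _]mulmx1 -(RRm a ha) mulmxA mulVmx ?mul1mx //.
exact: Runit.
Qed.

Lemma GLR_OW a ha : GLR a ha \in OW F.
Proof.
rewrite inE; apply/forallP => x; rewrite !kappaE GLRE bilR //.
Qed.

Lemma main_w (hF : (2 : F) != 0) (w : 'rV[F]_3) :
  exists g : {'GL_3[F]}, g \in OmegaW F /\ w *m GLval g = w *m T3.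
Proof.
set b := bvec w.
have [hbb hub hb0] := bvec_facts hF w; rewrite -/b in hbb hub hb0.
set c := zvec + b.
have hcc' : bil c c = 2 * (1 + b 0 i0).
  have -> : bil c c = bil b b + 2 * (b 0 i0) + 1 by rewrite !bilE !mxE /=; ring.
  by rewrite hbb; ring.
have hb1 : 1 + b 0 i0 != 0.
  by case: hb0 => ->; rewrite ?addr0 ?oner_eq0.
have hcc : bil c c != 0 by rewrite hcc' mulf_neq0.
have hz0 : bil zvec zvec != 0 by rewrite hz oner_eq0.
have ha : zvec *m R c = - b.
  have hzc : bil zvec c = 1 + b 0 i0 by rewrite !bilE !mxE /=; ring.
  rewrite Rv hzc hcc' divff ?mulf_neq0 // scale1r /c opprD addrA subrr add0r //.
exists [~ GLR zvec hz0, GLR c hcc]%g; split.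
  by apply: mem_commg; apply: GLR_OW.
rewrite /commg /conjg !GL_MxE !GL_VxE !GLRE !invR // !mulmxA.
rewrite Rconj // ha Rv T3E.
have -> : bil (w *m R zvec) (- b) = 0.
  by rewrite bilN hub oppr0.
by rewrite mulr0 mul0r scale0r subr0.
Qed.
End W.

Lemma tauE (F : finFieldType) d : tau F d = block_mx (T3 F) 0 0 1%:M.
Proof.
apply/matrixP => i j; rewrite !mxE.
have -> : (i == j) = (nat_of_ord i == nat_of_ord j) by [].
case: splitP => i' hi; rewrite !mxE; case: splitP => j' hj; rewrite !mxE hi hj /=.
- by [].
- by rewrite ifN //; apply/eqP => h; have := ltn_ord i'; rewrite h ltnNge leq_addr.
- by rewrite ifN //; apply/eqP => h; have := ltn_ord j'; rewrite -h ltnNge leq_addr.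
- by rewrite eqn_add2l (_ : (i' == j') = (nat_of_ord i' == nat_of_ord j')) //; case: (_ == _).
Qed.

Theorem lemma3p5 (F : finFieldType) (hF : (2 : F) != 0) (d : nat) (hd : (2 <= d)%N)
  (a b c : F) (haniso : anisotropic2 F a b c)
  (v : 'rV[F]_(3 + 2 * (d - 1))) (hv : is_point F d a b c v) :
  exists g : {'GL_3[F]}, g \in OmegaW F /\
    exists lam : F, lam != 0 /\ v *m extU F d g = lam *: (v *m tau F d).
Proof.
have [g [hg hw]] := main_w F hF (lsubmx v).
exists g; split => //; exists 1; split; first exact: oner_neq0.
by rewrite scale1r tauE /extU -(hsubmxK v) !mul_row_block hw.
Qed.
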